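(* Let $G$ be a finite simple graph with a $C_3$-free vertex $x$, and let $X=N_G[x]$, so that the induced subgraph on $X$ is a star $K_{1,m}$ with center $x$ and $m\ge 1$. Let $\pi:V(G)\to V(G')$ be a bijection such that: (i) $\pi(v)=v'$ for every $v\in V(G)\setminus X$; (ii) $\pi(v)\neq v'$ for every $v\in X$; (iii) if $m\ge 2$, then for all $u,v\in X$, $\pi(v)=u'$ implies $\pi(u)\neq v'$. Then no separable $\gamma$-set of $G$ is effective under $\pi$.
   Context: For a graph $G$, a set $D\subseteq V(G)$ is dominating if every vertex not in $D$ has a neighbor in $D$; $\gamma(G)$ is the minimum size of a dominating set, and a $\gamma$-set is a dominating set of size $\gamma(G)$. For sets $D,S$ write $D\succ S$ if every vertex of $S$ has a neighbor in $D$. Let $G'$ be a disjoint copy of $G$, the copy of $v\in V(G)$ being denoted $v'$ and $A'=\{v':v\in A\}$. A $\gamma$-set $A$ of $G$ is separable (an $A_1$-$\gamma$-set) if it can be partitioned into two nonempty sets $A_1,A_2$ with $A_1\succ V(G)\setminus A$. Given such a partition and a bijection $\pi:V(G)\to V(G')$, put $B_1'=\pi(A_1)$, $B_2'=\pi(A_2)$, $B'=\pi(A)$. The separable $\gamma$-set $A=A_1\cup A_2$ is effective under $\pi$ if $B'$ is a $B_2'$-$\gamma$-set of $G'$, i.e. $B'$ is a $\gamma$-set of $G'$ partitioned into the nonempty sets $B_1',B_2'$ with $B_2'\succ V(G')\setminus B'$. A non-isolated vertex is $C_3$-free if it belongs to no triangle of $G$. *)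

(* Defs.v *)
From mathcomp Require Import all_boot all_fingroup.
Set Implicit Arguments. Unset Strict Implicit. Unset Printing Implicit Defensive.

Section Graphs.
Variables (T : finType) (e : rel T).

Definition simple_graph := symmetric e /\ irreflexive e.

Definition dominating (D : {set T}) :=
  forall v, v \notin D -> exists2 d, d \in D & e d v.

Definition gamma_set (D : {set T}) :=
  dominating D /\ forall D' : {set T}, dominating D' -> #|D| <= #|D'|.

Definition dom_over (D S : {set T}) :=
  forall s, s \in S -> exists2 d, d \in D & e d s.

Definition separable_partition (A A1 A2 : {set T}) :=
  [/\ gamma_set A, A1 :|: A2 = A, [disjoint A1 & A2],
      A1 != set0 /\ A2 != set0 & dom_over A1 (~: A)].

(* The copy G' of G is taken on the same vertex type with the same edges,
   the copy v' of v being v itself.  Effective under pi: B' = pi(A) is a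
   B2'-gamma-set of G' partitioned into B1' = pi(A1), B2' = pi(A2). *)
Definition effective (pi : {perm T}) (A A1 A2 : {set T}) :=
  separable_partition (pi @: A) (pi @: A2) (pi @: A1).

Definition nbhd (x : T) : {set T} := [set v | e x v].
Definition cnbhd (x : T) : {set T} := x |: nbhd x.

Definition C3_free_vertex (x : T) :=
  (exists v, e x v) /\ ~ (exists u v, [&& e x u, e x v & e u v]).

End Graphs.

(* Main.v *)
Require Import Defs.
From mathcomp Require Import all_boot all_fingroup.
From mathcomp Require Import zify.
Set Implicit Arguments. Unset Strict Implicit. Unset Printing Implicit Defensive.

Section Aux.
Variables (T : finType) (e : rel T).
Hypothesis Hsym : symmetric e.
Hypothesis Hirr : irreflexive e.

Lemma sub1 (A A1 A2 : {set T}) a : separable_partition e A A1 A2 -> a \in A1 -> a \in A.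
Proof. by case=> _ <- _ _ _ h; rewrite inE h. Qed.
Lemma sub2 (A A1 A2 : {set T}) a : separable_partition e A A1 A2 -> a \in A2 -> a \in A.
Proof. by case=> _ <- _ _ _ h; rewrite inE h orbT. Qed.
Lemma dis12 (A A1 A2 : {set T}) a : separable_partition e A A1 A2 -> a \in A1 -> a \in A2 -> False.
Proof. by case=> _ _ dis _ _ h1 h2; rewrite (disjointFr dis h1) in h2. Qed.

Lemma G1 (A A1 A2 : {set T}) a b : separable_partition e A A1 A2 ->
  a \in A2 -> b \in A -> e a b -> False.
Proof.
move=> H aA2 bA eab; have aA := sub2 H aA2.
case: H => [[domA minA] eqU dis _ domA1].
have : dominating e (A :\ a).
  move=> v; rewrite !inE negb_and negbK => /orP [/eqP-> | vA].
    exists b; last by rewrite Hsym.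
    rewrite !inE bA andbT; apply/eqP=> ba; by rewrite ba Hirr in eab.
  have [d dA1 edv] := domA1 v ltac:(by rewrite inE).
  exists d => //; rewrite !inE -eqU inE dA1 andbT.
  by apply/eqP=> da; rewrite da (disjointFl dis aA2) in dA1.
move/minA; rewrite (cardsD1 a A) aA; lia.
Qed.

Lemma G3 (A A1 A2 : {set T}) x a1 a2 : separable_partition e A A1 A2 ->
  x \notin A -> a1 \in A2 -> a2 \in A2 -> e x a1 -> e x a2 -> a1 = a2.
Proof.
move=> H xA h1 h2 e1 e2; apply/eqP/negPn/negP => ne.
have a1A := sub2 H h1; have a2A := sub2 H h2.
case: H => [[domA minA] eqU dis _ domA1].
have : dominating e (x |: ((A :\ a1) :\ a2)).
  move=> v hv.
  case: (eqVneq v a1) => [->|va1]; first by exists x; rewrite ?inE ?eqxx.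
  case: (eqVneq v a2) => [->|va2]; first by exists x; rewrite ?inE ?eqxx.
  have vA : v \notin A by apply/negP=> vA; move: hv; rewrite !inE va1 va2 vA orbT.
  have [d dA1 edv] := domA1 v ltac:(by rewrite inE).
  exists d => //; rewrite !inE -eqU inE dA1 !andbT.
  apply/orP; right; apply/andP; split; apply/eqP=> da; by rewrite da (disjointFl dis) in dA1.
move/minA; rewrite cardsU1 (cardsD1 a1 A) (cardsD1 a2 (A :\ a1)) a1A !inE a2A andbT.
rewrite eq_sym ne (negbTE xA) !andbF /=; lia.

Qed.

Variable x : T.
Hypothesis C3 : C3_free_vertex e x.

Lemma K (A A1 A2 B B1 B2 : {set T}) y :
  separable_partition e A A1 A2 -> separable_partition e B B1 B2 ->
  (forall d, d \notin cnbhd e x -> d \in A1 -> d \in B2) ->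
  e x y -> y \in B -> y \notin A -> x \notin A1 -> False.
Proof.
move=> HA HB corr exy yB yA xA1.
have [d dA1 edy] : exists2 d, d \in A1 & e d y.
  by case: HA => _ _ _ _; apply; rewrite inE.
have dX : d \notin cnbhd e x.
  rewrite !inE negb_or; apply/andP; split.
    by apply/eqP=> dx; rewrite -dx dA1 in xA1.
  apply/negP=> exd; case: C3 => _; apply; exists d, y; by rewrite exd exy edy.
exact: (G1 HB (corr d dX dA1) yB edy).
Qed.

Lemma K2 (A A1 A2 B B1 B2 : {set T}) y :
  separable_partition e A A1 A2 -> separable_partition e B B1 B2 ->
  (forall d, d \notin cnbhd e x -> d \in A1 -> d \in B2) ->
  x \in A2 -> e x y -> y \in B -> False.
Proof.
move=> HA HB corr xA2 exy yB.
apply: (K HA HB corr exy yB).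
  by apply/negP=> yA; exact: (G1 HA xA2 yA exy).
by apply/negP=> xA1; exact: (dis12 HA xA1 xA2).
Qed.

Lemma K3 (A A1 A2 B B1 B2 : {set T}) y :
  separable_partition e A A1 A2 -> separable_partition e B B1 B2 ->
  x \in A1 -> y \in B2 -> e x y ->
  (forall d, e x d -> d \in B1 -> exists2 d', e x d' & d' \in A2) -> False.
Proof.
move=> HA HB xA1 yB2 exy pre.
have xB : x \notin B by apply/negP=> xB; apply: (G1 HB yB2 xB); rewrite Hsym.
have [d dB1 edx] : exists2 d, d \in B1 & e d x.
  by case: HB => _ _ _ _; apply; rewrite inE.
have [d' ed' d'A2] := pre d ltac:(by rewrite Hsym) dB1.
apply: (G1 HA d'A2 (sub1 HA xA1)); by rewrite Hsym.
Qed.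

End Aux.

Theorem mainTheorem2 (T : finType) (e : rel T) (x : T) (pi : {perm T}) :
  simple_graph e ->
  C3_free_vertex e x ->
  (forall v, v \notin cnbhd e x -> pi v = v) ->
  (forall v, v \in cnbhd e x -> pi v != v) ->
  (2 <= #|nbhd e x| ->
     forall u v, u \in cnbhd e x -> v \in cnbhd e x -> pi v = u -> pi u != v) ->
  forall A A1 A2 : {set T},
    separable_partition e A A1 A2 -> ~ effective e pi A A1 A2.
Proof.
move=> [Hsym Hirr] C3 P1 P2 P3 A A1 A2 HA HB.
rewrite /effective in HB.
have inX v : (v \in cnbhd e x) = (v == x) || e x v by rewrite !inE.
have xX : x \in cnbhd e x by rewrite inX eqxx.
have piX v : v \in cnbhd e x -> pi v \in cnbhd e x.
  move=> vX; apply/negPn/negP=> h; have := P1 _ h => /perm_inj h2.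
  by move: (P2 v vX); rewrite h2 eqxx.
have preX c : pi c \in cnbhd e x -> c \in cnbhd e x.
  by move=> h; apply/negPn/negP=> h2; rewrite (P1 _ h2) (negbTE h2) in h.
have corrP S d : d \notin cnbhd e x -> (d \in pi @: S) = (d \in S).
  move=> dX; rewrite -{1}(P1 _ dX); apply/imsetP/idP => [[c cS /perm_inj ->] // | dS]; by exists d.
have nb v : e x v -> pi v != x -> e x (pi v).
  move=> exv ne; have := piX v; rewrite !inX exv orbT => /(_ isT).
  by rewrite (negbTE ne).
have prenb c : pi c = x -> e x c.
  move=> h; have : c \in cnbhd e x by apply: preX; rewrite h.
  rewrite inX => /orP [/eqP cx|//]; move: (P2 x xX); by rewrite -{1}cx h eqxx.
have prenb2 c : e x (pi c) -> c != x -> e x c.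
  move=> h ne; have : c \in cnbhd e x by apply: preX; rewrite inX h orbT.
  by rewrite inX (negbTE ne).
have corr1 d : d \notin cnbhd e x -> d \in A1 -> d \in pi @: A1.
  by move=> dX; rewrite corrP.
have corr2 d : d \notin cnbhd e x -> d \in pi @: A2 -> d \in A2.
  by move=> dX; rewrite corrP.
have xpix : e x (pi x) by have := piX x xX; rewrite inX (negbTE (P2 x xX)).
have xA2 : x \notin A2.
  apply/negP=> xA2; apply: (K2 Hsym Hirr C3 HA HB corr1 xA2 xpix).
  by apply: imset_f; exact: (sub2 HA xA2).
have xB2 : x \notin pi @: A1.
  apply/negP=> xB2; case/imsetP: (xB2) => z zA1 xz.
  apply: (K2 Hsym Hirr C3 HB HA corr2 xB2 (prenb z (esym xz))).
  exact: (sub1 HA zA1).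
have xA1 : x \notin A1.
  apply/negP=> xA1; apply: (K3 Hsym Hirr HA HB xA1 (imset_f pi xA1) xpix).
  move=> d exd /imsetP [c cA2 dc]; exists c => //.
  apply: prenb2; first by rewrite -dc.
  by apply/eqP=> cx; rewrite cx in cA2; exact: (dis12 HA xA1 cA2).
have xB1 : x \notin pi @: A2.
  apply/negP=> xB1; case/imsetP: (xB1) => z zA2 xz.
  apply: (K3 Hsym Hirr HB HA xB1 zA2 (prenb z (esym xz))).
  move=> d exd dA1; exists (pi d); last exact: imset_f.
  apply: nb => //; apply/eqP=> pdx; move: xz; rewrite -pdx => /perm_inj dz.
  by rewrite dz in dA1; exact: (dis12 HA dA1 zA2).
have xA : x \notin A.
  by case: HA => _ <- _ _ _; rewrite inE negb_or xA1 xA2.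
have xB : x \notin pi @: A.
  by case: HB => _ <- _ _ _; rewrite inE negb_or xB1 xB2.
have BA y : e x y -> y \in pi @: A -> y \in A.
  move=> exy yB; apply/negPn/negP=> yA.
  exact: (K Hsym Hirr C3 HA HB corr1 exy yB yA xA1).
have inBnb v : v \in A -> e x v -> e x (pi v).
  move=> vA exv; apply: nb => //; apply/eqP=> pvx.
  by move: xB; rewrite -pvx imset_f.
have [d1 d1A1 ed1] : exists2 d, d \in A1 & e d x.
  by case: HA => _ _ _ _; apply; rewrite inE.
have exd1 : e x d1 by rewrite Hsym.
have [d2 d2B1 ed2] : exists2 d, d \in pi @: A2 & e d x.
  by case: HB => _ _ _ _; apply; rewrite inE.
case/imsetP: d2B1 => c cA2 d2c.
have exc : e x c.
  apply: prenb2; first by rewrite -d2c Hsym.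
  by apply/eqP=> cx; rewrite -cx (sub2 HA cA2) in xA.
have uniqA a : a \in A2 -> e x a -> a = c.
  by move=> aA2 exa; exact: (G3 HA xA aA2 cA2 exa exc).
have uniqB b : b \in pi @: A1 -> e x b -> b = pi d1.
  by move=> bB2 exb; exact: (G3 HB xB bB2 (imset_f pi d1A1) exb (inBnb _ (sub1 HA d1A1) exd1)).
have cX : c \in cnbhd e x by rewrite inX exc orbT.
have d1X : d1 \in cnbhd e x by rewrite inX exd1 orbT.
have pc : pi c = d1.
  have epc : e x (pi c) := inBnb _ (sub2 HA cA2) exc.
  have pcA : pi c \in A by apply: BA => //; apply: imset_f; exact: (sub2 HA cA2).
  move: pcA; case: (HA) => _ <- _ _ _; rewrite inE => /orP [h|h].
    apply: (@perm_inj _ pi); apply: uniqB; first exact: imset_f.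
    apply: inBnb => //; exact: (sub1 HA h).
  by move: (P2 c cX); rewrite (uniqA _ h epc) eqxx.
have pd1 : pi d1 = c.
  have epd : e x (pi d1) := inBnb _ (sub1 HA d1A1) exd1.
  have pdA : pi d1 \in A by apply: BA => //; apply: imset_f; exact: (sub1 HA d1A1).
  move: pdA; case: (HA) => _ <- _ _ _; rewrite inE => /orP [h|h].
    have := uniqB (pi (pi d1)) (imset_f pi h) (inBnb _ (sub1 HA h) epd).
    by move/perm_inj => h2; move: (P2 d1 d1X); rewrite h2 eqxx.
  exact: uniqA.
have ne : d1 != c by apply/eqP=> dc; rewrite dc in d1A1; exact: (dis12 HA d1A1 cA2).
have card2 : 2 <= #|nbhd e x|.
  have sub : [set d1; c] \subset nbhd e x.
    by apply/subsetP=> v; rewrite !inE => /orP [] /eqP ->.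
  by have := subset_leq_card sub; rewrite cards2 ne.
by move: (P3 card2 c d1 cX d1X pd1); rewrite pc eqxx.
Qed.
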